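(* Suppose the underlying undirected graph of $G$ is a tree (so $m=n$ and the reduced incidence matrix $B$ is an invertible $n\times n$ matrix). Fix $s\in\mathbb C^n$. Then (1) $\hat h(\mathbb X(s))=\hat{\mathbb Y}(s)$; and (2) for every $\hat y\in\hat{\mathbb Y}(s)$, the vector $\theta_*:=\mathcal P(B^{-1}\beta(\hat y))$ is the unique vector in $(-\pi,\pi]^n$ such that $h_{\theta_*}(\hat y)\in\mathbb X(s)$.
   Context: $G=(N,E)$ is a directed graph with nodes $N=\{0,1,\dots,n\}$ and $m=|E|$ links; $(i,j)\in E$ denotes a link from $i$ to $j$. Each link has impedance $z_{ij}=r_{ij}+\mathbf{i}x_{ij}$, each node $i$ shunt admittance $y_i=g_i-\mathbf{i}b_i$. The voltage $V_0$ at node 0 is given and taken as angle reference: $V_0=|V_0|$ real and positive; $v_0:=|V_0|^2$. $\mathbb X(s)$ is the set of $x=(S,I,V,s_0)$ with $S,I\in\mathbb C^E$, $V=(V_1,\dots,V_n)$, $s_0\in\mathbb C$ satisfying $V_i-V_j=z_{ij}I_{ij}$, $S_{ij}=V_iI_{ij}^*$ for $(i,j)\in E$, and $\sum_{k:(j,k)\in E}S_{jk}-\sum_{i:(i,j)\in E}(S_{ij}-z_{ij}|I_{ij}|^2)+y_j^*|V_j|^2=s_j$ for $j\in N$. $\hat{\mathbb Y}(s)$ is the set of real $\hat y=(P,Q,\ell,v,p_0,q_0)$ ($P,Q,\ell$ indexed by $E$, $v=(v_1,\dots,v_n)$), with $S_{ij}:=P_{ij}+\mathbf{i}Q_{ij}$,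 $s_j=p_j+\mathbf{i}q_j$, satisfying $p_j=\sum_{k:(j,k)\in E}P_{jk}-\sum_{i:(i,j)\in E}(P_{ij}-r_{ij}\ell_{ij})+g_jv_j$, $q_j=\sum_{k:(j,k)\in E}Q_{jk}-\sum_{i:(i,j)\in E}(Q_{ij}-x_{ij}\ell_{ij})+b_jv_j$ for $j\in N$, and $v_j=v_i-2(r_{ij}P_{ij}+x_{ij}Q_{ij})+(r_{ij}^2+x_{ij}^2)\ell_{ij}$, $\ell_{ij}=(P_{ij}^2+Q_{ij}^2)/v_i$ for $(i,j)\in E$. Projection: $\hat h(S,I,V,s_0)=(\mathrm{Re}\,S,\mathrm{Im}\,S,(|I_{ij}|^2)_{(i,j)\in E},(|V_i|^2)_{i=1}^n,\mathrm{Re}\,s_0,\mathrm{Im}\,s_0)$. Inverse projection for $\theta\in(-\pi,\pi]^n$ (with $\theta_0:=0$): $h_\theta(\hat y)=(S,I,V,s_0)$ with $S_{ij}=P_{ij}+\mathbf{i}Q_{ij}$, $I_{ij}=\sqrt{\ell_{ij}}e^{\mathbf{i}(\theta_i-\angle S_{ij})}$, $V_i=\sqrt{v_i}e^{\mathbf{i}\theta_i}$, $s_0=p_0+\mathbf{i}q_0$. $B$ is the reduced incidence matrix: $B_{ei}=1$ if link $e$ leaves node $i$, $-1$ if it enters $i$, $0$ otherwise ($e\in E$, $i=1,\dots,n$). $\beta(\hat y)\in(-\pi,\pi]^m$ has entries $\beta_{ij}=\angle(v_i-z_{ij}^*S_{ij})$. $\mathcal P$ reduces each component modulo $2\pi$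 into $(-\pi,\pi]$. *)

(* Defs.v *)
From HB Require Import structures.
From mathcomp Require Import all_boot all_order all_algebra.
From mathcomp Require Import complex.
From mathcomp Require Import reals trigo.

Set Implicit Arguments.
Unset Strict Implicit.
Unset Printing Implicit Defensive.

Import Order.TTheory GRing.Theory Num.Theory.
Local Open Scope ring_scope.
Local Open Scope complex_scope.

(* Graph.  Nodes are 'I_n.+1 (node 0 is the slack node); links are    *)
(* indexed by a finite type 'I_m, link e goes from [tl e] to [hd e].   *)

Section Graph.
Variables (n m : nat) (tl hd : 'I_m -> 'I_n.+1).

Definition uadj : rel 'I_n.+1 := fun u v =>
  [exists e : 'I_m, ((tl e == u) && (hd e == v)) || ((tl e == v) && (hd e == u))].

Definition ujoins (e : 'I_m) (u v : 'I_n.+1) : Prop :=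
  (tl e = u /\ hd e = v) \/ (tl e = v /\ hd e = u).

(* a cycle of the underlying undirected multigraph: k+1 distinct links and
   k+1 distinct nodes u_0 .. u_k, link f t joining u_t and u_(t+1 mod k+1)
   (k = 0 : self loop, k = 1 : two parallel links) *)
Definition ucycle_exists : Prop :=
  exists (k : nat) (f : 'I_k.+1 -> 'I_m) (u : 'I_k.+1 -> 'I_n.+1),
    injective f /\ injective u /\ forall t, ujoins (f t) (u t) (u (ordS t)).

Definition is_tree : Prop :=
  (forall u v : 'I_n.+1, connect uadj u v) /\ ~ ucycle_exists.
End Graph.

Section Aux.
Variable R : realType.

Definition cRe (z : R[i]) : R := let: a +i* _ := z in a.
Definition cIm (z : R[i]) : R := let: _ +i* b := z in b.

Definition cabs (z : R[i]) : R := Num.sqrt (cRe z ^+ 2 + cIm z ^+ 2).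

Definition expi (t : R) : R[i] := cos t +i* sin t.

(* principal argument, with values in (-pi, pi]; convention angle 0 = 0 *)
Definition carg (z : R[i]) : R :=
  if z == 0 then 0
  else if 0 <= cIm z then acos (cRe z / cabs z)
  else - acos (cRe z / cabs z).

(* reduction modulo 2 pi into (-pi, pi] :
   P t = t - 2 pi k with k the unique integer with t - 2 pi k in (-pi, pi] *)
Definition Pmod (t : R) : R :=
  t - 2 * pi * (Num.ceil ((t - pi) / (2 * pi)))%:~R.

Definition in_range (n : nat) (th : 'I_n -> R) : Prop :=
  forall i, - pi < th i /\ th i <= pi.

(* extension of a vector indexed by nodes 1..n to nodes 0..n *)
Definition ext (T : Type) (n : nat) (a0 : T) (a : 'I_n -> T) (j : 'I_n.+1) : T :=
  match unlift ord0 j with None => a0 | Some i => a i end.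
End Aux.

Record xvar (R : realType) (n m : nat) := XVar {
  xS : 'I_m -> R[i]; xI : 'I_m -> R[i]; xV : 'I_n -> R[i]; xs0 : R[i] }.

Record yvar (R : realType) (n m : nat) := YVar {
  yP : 'I_m -> R; yQ : 'I_m -> R; yl : 'I_m -> R; yv : 'I_n -> R;
  yp0 : R; yq0 : R }.

Section Model.
Variables (R : realType) (n m : nat) (tl hd : 'I_m -> 'I_n.+1).
Variables (r x : 'I_m -> R) (g b : 'I_n.+1 -> R) (V0 : R).
(* V0 = |V_0| > 0, v_0 = V0^2 ; s = (s_1, ..., s_n) *)
Variable s : 'I_n -> R[i].

Definition zimp (e : 'I_m) : R[i] := r e +i* x e.
Definition yshunt_conj (j : 'I_n.+1) : R[i] := g j +i* b j.

Definition inX (X : xvar R n m) : Prop :=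
  let Vf := ext (V0%:C) (xV X) in
  let sf := ext (xs0 X) s in
  (forall i, xV X i != 0) /\
  (forall e, Vf (tl e) - Vf (hd e) = zimp e * xI X e) /\
  (forall e, xS X e = Vf (tl e) * (xI X e)^*) /\
  (forall j : 'I_n.+1,
     \sum_(e < m | tl e == j) xS X e
     - \sum_(e < m | hd e == j) (xS X e - zimp e * ((cabs (xI X e)) ^+ 2)%:C)
     + yshunt_conj j * ((cabs (Vf j)) ^+ 2)%:C = sf j).

Definition inY (Y : yvar R n m) : Prop :=
  let vf := ext (V0 ^+ 2) (yv Y) in
  let pf := ext (yp0 Y) (fun i => cRe (s i)) in
  let qf := ext (yq0 Y) (fun i => cIm (s i)) in
  (forall i, 0 < yv Y i) /\
  (forall j : 'I_n.+1,
     pf j = \sum_(e < m | tl e == j) yP Y e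
            - \sum_(e < m | hd e == j) (yP Y e - r e * yl Y e) + g j * vf j) /\
  (forall j : 'I_n.+1,
     qf j = \sum_(e < m | tl e == j) yQ Y e
            - \sum_(e < m | hd e == j) (yQ Y e - x e * yl Y e) + b j * vf j) /\
  (forall e, vf (hd e) = vf (tl e) - 2 * (r e * yP Y e + x e * yQ Y e)
                         + (r e ^+ 2 + x e ^+ 2) * yl Y e) /\
  (forall e, yl Y e = (yP Y e ^+ 2 + yQ Y e ^+ 2) / vf (tl e)).

Definition hhat (X : xvar R n m) : yvar R n m :=
  YVar (fun e => cRe (xS X e)) (fun e => cIm (xS X e))
       (fun e => cabs (xI X e) ^+ 2) (fun i => cabs (xV X i) ^+ 2)
       (cRe (xs0 X)) (cIm (xs0 X)).

Definition htheta (th : 'I_n -> R) (Y : yvar R n m) : xvar R n m :=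
  let thf := ext 0 th in
  let Sf := fun e => yP Y e +i* yQ Y e in
  XVar Sf
       (fun e => (Num.sqrt (yl Y e))%:C * expi (thf (tl e) - carg (Sf e)))
       (fun i => (Num.sqrt (yv Y i))%:C * expi (th i))
       (yp0 Y +i* yq0 Y).

Definition beta (Y : yvar R n m) (e : 'I_m) : R :=
  let vf := ext (V0 ^+ 2) (yv Y) in
  carg ((vf (tl e))%:C - (zimp e)^* * (yP Y e +i* yQ Y e)).
End Model.

(* reduced incidence matrix B (rows: links, columns: nodes 1..n) *)
Definition incB (R : realType) (n m : nat) (tl hd : 'I_m -> 'I_n.+1) : 'M[R]_(m, n) :=
  \matrix_(e < m, i < n)
     (if tl e == lift ord0 i then 1 else if hd e == lift ord0 i then -1 else 0).

Definition theta_star (R : realType) (n : nat) (tl hd : 'I_n -> 'I_n.+1)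
    (r x : 'I_n -> R) (V0 : R) (Y : yvar R n n) (i : 'I_n) : R :=
  Pmod ((invmx (incB R tl hd) *m \col_e beta tl r x V0 Y e) i 0).

(* Main.v *)
Require Import Defs.
From HB Require Import structures.
From mathcomp Require Import all_boot all_order all_algebra.
From mathcomp Require Import complex.
From mathcomp Require Import reals trigo.
From mathcomp Require Import ring lra.
From Stdlib Require FunctionalExtensionality.
Import Order.TTheory GRing.Theory Num.Theory.
Local Open Scope ring_scope.
Local Open Scope complex_scope.
Set Implicit Arguments. Unset Strict Implicit. Unset Printing Implicit Defensive.
Section Cplx.
Variable R : realType.
Implicit Types (a b c d t : R) (z w : R[i]).

Lemma cmulE a b c d : (a +i* b) * (c +i* d) = (a*c - b*d) +i* (a*d + b*c).
Proof. by []. Qed.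
Lemma caddE a b c d : (a +i* b) + (c +i* d) = (a+c) +i* (b+d).
Proof. by []. Qed.
Lemma coppE a b : - (a +i* b) = (-a) +i* (-b).
Proof. by []. Qed.
Lemma crealE a : a%:C = a +i* 0.
Proof. by []. Qed.
Lemma cconjE a b : (a +i* b)^* = a +i* (-b).
Proof. by []. Qed.
Lemma csubE a b c d : (a +i* b) - (c +i* d) = (a-c) +i* (b-d).
Proof. by []. Qed.
Lemma c0E : (0 : R[i]) = 0 +i* 0. Proof. by []. Qed.
Lemma c1E : (1 : R[i]) = 1 +i* 0. Proof. by []. Qed.
Lemma ceqE a b c d : (a +i* b = c +i* d) <-> (a = c /\ b = d).
Proof. by split => [[-> ->]|[-> ->]]. Qed.

Lemma cetaE z : z = cRe z +i* cIm z. Proof. by case: z. Qed.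

Lemma cabs_sq z : cabs z ^+ 2 = cRe z ^+ 2 + cIm z ^+ 2.
Proof. by rewrite /cabs sqr_sqrtr // addr_ge0 // sqr_ge0. Qed.

Lemma cabs_ge0 z : 0 <= cabs z. Proof. exact: sqrtr_ge0. Qed.

Lemma cabs_eq0 z : (cabs z == 0) = (z == 0).
Proof.
case: z => a b; rewrite /cabs /= sqrtr_eq0.
apply/idP/idP.
  move=> h; have h0 : a ^+ 2 + b ^+ 2 = 0.
    by apply/eqP; rewrite eq_le h addr_ge0 // sqr_ge0.
  have ha : a = 0 by apply/eqP; rewrite -sqrf_eq0; apply/eqP; nra.
  have hb : b = 0 by apply/eqP; rewrite -sqrf_eq0; apply/eqP; nra.
  by rewrite ha hb.
by move/eqP => [-> ->]; rewrite expr0n /= addr0.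
Qed.

Lemma cabs_gt0 z : z != 0 -> 0 < cabs z.
Proof. by move=> hz; rewrite lt_def cabs_eq0 hz cabs_ge0. Qed.

Lemma cabs_real a : cabs a%:C = `|a|.
Proof. by rewrite /cabs /= expr0n /= addr0 sqrtr_sqr. Qed.

Lemma expi_ReIm t : cRe (expi t) = cos t /\ cIm (expi t) = sin t.
Proof. by []. Qed.

Lemma expiD a b : expi (a + b) = expi a * expi b.
Proof. by rewrite /expi cmulE cosD sinD; congr (_ +i* _); ring. Qed.

Lemma expi0 : expi (0:R) = 1.
Proof. by rewrite /expi cos0 sin0. Qed.

Lemma conj_expi t : (expi t)^* = expi (- t).
Proof. by rewrite /expi cconjE cosN sinN. Qed.

Lemma expiN t : expi t * expi (- t) = 1.
Proof. by rewrite -expiD subrr expi0. Qed.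

Lemma expi_neq0 t : expi t != 0.
Proof. by apply/eqP => h; move: (expiN t); rewrite h mul0r => /eqP; rewrite eq_sym oner_eq0. Qed.

Lemma cabs_polar c t : 0 <= c -> cabs (c%:C * expi t) = c.
Proof.
move=> hc; rewrite /cabs /expi crealE cmulE /=.
have -> : (c * cos t - 0 * sin t) ^+ 2 + (c * sin t + 0 * cos t) ^+ 2
        = c ^+ 2 * (cos t ^+ 2 + sin t ^+ 2) by ring.
by rewrite cos2Dsin2 mulr1 sqrtr_sqr ger0_norm.
Qed.

Lemma expi_per t (k : int) : expi (t + 2 * pi * k%:~R) = expi t.
Proof.
have hn : forall (m : nat) (u : R), expi (u + 2 * pi * m%:R) = expi u.
  move=> m u; rewrite /expi.
  have -> : 2 * (pi : R) * m%:R = ((pi : R) *+ 2) *+ m.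
    by rewrite mulr_natr mulr_natl.
  by rewrite (periodicn (@cosD2pi R)) (periodicn (@sinD2pi R)).
case: k => m; first by rewrite hn.
rewrite NegzE mulrNz.
have := hn m.+1 (t + 2 * pi * - (m.+1%:R)). 
by rewrite mulrN addrNK => <-.
Qed.


Lemma carg_cs z : z != 0 ->
  cos (carg z) = cRe z / cabs z /\ sin (carg z) = cIm z / cabs z.
Proof.
move=> hz; have hc := cabs_gt0 hz.
have hc2 := cabs_sq z.
move: hc hc2; rewrite /carg (negbTE hz).
case: z hz => a b /= hz; set c := cabs _ => hc hc2.
have hc0 : c != 0 by rewrite gt_eqF.
have hy : -1 <= a / c <= 1.
  rewrite ler_pdivrMr // ler_pdivlMr //; apply/andP; split; nra.
have hs : Num.sqrt (1 - (a / c) ^+ 2) = `|b| / c.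
  have -> : 1 - (a / c) ^+ 2 = (b / c) ^+ 2.
    have hb2 : b ^+ 2 = c ^+ 2 - a ^+ 2 by rewrite hc2; ring.
    by rewrite !expr_div_n hb2; field.
  by rewrite sqrtr_sqr normf_div (gtr0_norm hc).
case: (lerP 0 b) => hb.
  by rewrite acosK ?inE // sin_acos // hs ger0_norm.
by rewrite cosN sinN acosK ?inE // sin_acos // hs ltr0_norm // mulNr opprK.
Qed.

Lemma polar z : z = (cabs z)%:C * expi (carg z).
Proof.
have [->|hz] := eqVneq z 0.
  by rewrite (_ : cabs 0 = 0) ?mul0r //; apply/eqP; rewrite cabs_eq0.
have [hcs hsn] := carg_cs hz.
have hc0 : cabs z != 0 by rewrite gt_eqF // cabs_gt0.
rewrite /expi hcs hsn crealE cmulE.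
rewrite [LHS]cetaE; congr (_ +i* _); field => //.
Qed.

Lemma cabs_expi t : cabs (expi t) = 1.
Proof. by rewrite -[expi t]mul1r -[1]/((1:R)%:C) cabs_polar. Qed.

Lemma carg_expi t : - pi < t <= pi -> carg (expi t) = t.
Proof.
move=> /andP[h1 h2].
rewrite /carg (negbTE (expi_neq0 t)) cabs_expi divr1 /=.
case: (lerP 0 t) => ht.
  rewrite sin_ge0_pi ?ht //; apply: cosK; by rewrite in_itv /= ht.
have hs : sin t < 0.
  by rewrite -[t]opprK sinN oppr_lt0 sin_gt0_pi // oppr_gt0 ht ltrNl.
rewrite leNgt hs /= cosKN ?opprK // (ltW ht) andbT; lra.
Qed.

Lemma expi_inj a b : - pi < a <= pi -> - pi < b <= pi -> expi a = expi b -> a = b.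
Proof. by move=> ha hb e; rewrite -(carg_expi ha) -(carg_expi hb) e. Qed.

Lemma Pmod_range t : - pi < Pmod t <= pi.
Proof.
rewrite /Pmod; set k := Num.ceil _.
have hpi : (0:R) < pi := @pi_gt0 R.
have := ceil_itv ((t - pi) / (2 * pi)); rewrite -/k => /andP[h1 h2].
rewrite intrB /= in h1.
set K : R := k%:~R in h1 h2 *.
set u := (t - pi) / (2 * pi) in h1 h2.
have hu : u * (2 * pi) = t - pi by rewrite /u; field; rewrite ?gt_eqF //; lra.
have h1' : (K - 1) * (2 * pi) < u * (2 * pi) by rewrite ltr_pM2r //; lra.
have h2' : u * (2 * pi) <= K * (2 * pi) by rewrite ler_pM2r //; lra.
apply/andP; split; nra.
Qed.

Lemma expi_Pmod t : expi (Pmod t) = expi t.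
Proof.
rewrite /Pmod; set k := Num.ceil _.
by rewrite -(expi_per t (- k)) intrN mulrN.
Qed.


Lemma cReD z w : cRe (z + w) = cRe z + cRe w. Proof. by case: z; case: w. Qed.
Lemma cImD z w : cIm (z + w) = cIm z + cIm w. Proof. by case: z; case: w. Qed.
Lemma cReN z : cRe (- z) = - cRe z. Proof. by case: z. Qed.
Lemma cImN z : cIm (- z) = - cIm z. Proof. by case: z. Qed.
Lemma cReB z w : cRe (z - w) = cRe z - cRe w. Proof. by rewrite cReD cReN. Qed.
Lemma cImB z w : cIm (z - w) = cIm z - cIm w. Proof. by rewrite cImD cImN. Qed.
Lemma cReM z w : cRe (z * w) = cRe z * cRe w - cIm z * cIm w. Proof. by case: z; case: w. Qed.
Lemma cImM z w : cIm (z * w) = cRe z * cIm w + cIm z * cRe w. Proof. by case: z => a b; case: w => c d /=; ring. Qed.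
Lemma cRe_real a : cRe a%:C = a. Proof. by []. Qed.
Lemma cIm_real a : cIm a%:C = 0. Proof. by []. Qed.
Lemma cRe0 : cRe (0 : R[i]) = 0. Proof. by []. Qed.
Lemma cIm0 : cIm (0 : R[i]) = 0. Proof. by []. Qed.
Lemma cRe_sum (I : finType) (P : pred I) (F : I -> R[i]) :
  cRe (\sum_(i | P i) F i) = \sum_(i | P i) cRe (F i).
Proof. exact: (big_morph _ cReD cRe0). Qed.
Lemma cIm_sum (I : finType) (P : pred I) (F : I -> R[i]) :
  cIm (\sum_(i | P i) F i) = \sum_(i | P i) cIm (F i).
Proof. exact: (big_morph _ cImD cIm0). Qed.
Lemma ceq2 z w : cRe z = cRe w -> cIm z = cIm w -> z = w.
Proof. by case: z; case: w => /= ? ? ? ? -> ->. Qed.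

Lemma conj_expiV t : (expi t)^* = (expi t)^-1.
Proof.
by apply: (mulfI (expi_neq0 t)); rewrite mulfV ?expi_neq0 // conj_expi expiN.
Qed.


Lemma NconjE z : Num.conj z = conjc z.
Proof. by []. Qed.

End Cplx.
Section Graph.
Variables (n : nat) (tl hd : 'I_n -> 'I_n.+1).
Hypothesis tree : is_tree tl hd.

Lemma ext0 (T : Type) (a0 : T) (a : 'I_n -> T) : ext a0 a ord0 = a0.
Proof. by rewrite /ext unlift_none. Qed.
Lemma extS (T : Type) (a0 : T) (a : 'I_n -> T) i : ext a0 a (lift ord0 i) = a i.
Proof. by rewrite /ext liftK. Qed.

Lemma no_loop e : tl e != hd e.
Proof.
apply/eqP => h; apply: tree.2.
exists 0%N, (fun _ => e), (fun _ => tl e); split; last split.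
- by move=> i j _; rewrite (ord1 i) (ord1 j).
- by move=> i j _; rewrite (ord1 i) (ord1 j).
- by move=> t; left.
Qed.

Lemma propagate (P : 'I_n.+1 -> Prop) :
  P ord0 -> (forall e, P (tl e) <-> P (hd e)) -> forall j, P j.
Proof.
move=> P0 HP j; have /connectP [p pth ->] := tree.1 ord0 j.
elim: p ord0 P0 pth => [|y p IH] z Pz //= /andP [hzy pth].
apply: IH pth; move: hzy => /existsP [e /orP [/andP[/eqP h1 /eqP h2]|/andP[/eqP h1 /eqP h2]]].
  by rewrite -h2; apply/HP; rewrite h1.
by rewrite -h1; apply/HP; rewrite h2.
Qed.

Lemma sum_ext (R : realType) (c : 'I_n -> R) t :
  \sum_j (if t == lift ord0 j then c j else 0) = ext 0 c t.
Proof.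
case: (unliftP ord0 t) => [i ->|->].
  rewrite extS (bigD1 i) //= eqxx big1 ?addr0 // => j hj.
  by rewrite (inj_eq (@lift_inj _ ord0)) eq_sym (negbTE hj).
rewrite ext0 big1 // => j _.
Qed.

Lemma incB_col (R : realType) (phi : 'I_n -> R) e :
  (incB R tl hd *m \col_i phi i) e 0 = ext 0 phi (tl e) - ext 0 phi (hd e).
Proof.
rewrite !mxE -!sum_ext -sumrB; apply: eq_bigr => j _; rewrite !mxE.
have := no_loop e.
case: (tl e =P lift ord0 j) => h1; case: (hd e =P lift ord0 j) => h2 //=.
- by rewrite h1 h2 eqxx.
- by rewrite mul1r subr0.
- by rewrite mulN1r sub0r.
- by rewrite mul0r subrr.
Qed.

Lemma incB_unit (R : realType) : incB R tl hd \in unitmx.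
Proof.
rewrite unitmxE unitfE -det_tr; apply/negP => /det0P [v hv0 hv].
have hB : incB R tl hd *m \col_i v 0 i = 0.
  apply: trmx_inj; rewrite trmx_mul trmx0 -hv; congr (_ *m _).
  by apply/matrixP => i j; rewrite !mxE (ord1 i).
have hP : forall j, ext 0 (fun i => v 0 i) j = 0.
  apply: propagate; first by rewrite ext0.
  move=> e; have := incB_col (fun i => v 0 i) e; rewrite hB mxE => /eqP.
  by rewrite eq_sym subr_eq0 => /eqP ->.
apply/negP: hv0; rewrite negbK; apply/eqP/matrixP => i j.
by rewrite (ord1 i) mxE -(hP (lift ord0 j)) extS.
Qed.

End Graph.
Lemma ext_map (T U : Type) (f : T -> U) n (a0 : T) (a : 'I_n -> T) j :
  f (ext a0 a j) = ext (f a0) (fun i => f (a i)) j.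
Proof. by case: (unliftP ord0 j) => [i ->|->]; rewrite ?extS ?ext0. Qed.

Section Main.
Variables (R : realType) (n : nat) (tl hd : 'I_n -> 'I_n.+1).
Variables (r x : 'I_n -> R) (g b : 'I_n.+1 -> R) (V0 : R) (s : 'I_n -> R[i]).
Hypothesis tree : is_tree tl hd.
Hypothesis V0pos : 0 < V0.

Lemma hatY X : inX tl hd r x g b V0 s X -> inY tl hd r x g b V0 s (hhat X).
Proof.
move=> [hV [hO [hS hB]]].
set Vf := ext V0%:C (xV X).
have hVf : forall j, Vf j != 0.
  move=> j; rewrite /Vf; case: (unliftP ord0 j) => [i ->|->]; rewrite ?extS ?ext0 //.
  by rewrite -[0]/((0:R)%:C) (inj_eq (@complexI _)) gt_eqF.
have hvf : forall j, ext (V0 ^+ 2) (yv (hhat X)) j = cabs (Vf j) ^+ 2.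
  move=> j; rewrite /Vf; case: (unliftP ord0 j) => [i ->|->]; rewrite ?extS ?ext0 //.
  by rewrite cabs_real gtr0_norm.
split; [|split; [|split; [|split]]].
- by move=> i /=; rewrite exprn_gt0 // cabs_gt0.
- move=> j; rewrite hvf /= -(@ext_map _ _ (@cRe R)) -(hB j).
  rewrite cReD cReB !cRe_sum cReM cRe_real cIm_real mulr0 subr0.
  congr (_ - _ + _); apply: eq_bigr => e _.
  by rewrite cReB cReM cRe_real cIm_real mulr0 subr0.
- move=> j; rewrite hvf /= -(@ext_map _ _ (@cIm R)) -(hB j).
  rewrite cImD cImB !cIm_sum cImM cRe_real cIm_real mulr0 add0r.
  congr (_ - _ + _); apply: eq_bigr => e _.
  by rewrite cImB cImM cRe_real cIm_real mulr0 add0r.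
- move=> e; rewrite !hvf /=.
  have -> : Vf (hd e) = Vf (tl e) - zimp r x e * xI X e.
    by rewrite -(hO e) opprB addrC subrK.
  rewrite (hS e) /zimp -/Vf; move: (Vf (tl e)) (xI X e) => [a1 b1] [c d].
  rewrite NconjE !cabs_sq cconjE !cmulE csubE /=; ring.
- move=> e; rewrite !hvf /=.
  have := hVf (tl e); rewrite (hS e) -/Vf.
  move: (Vf (tl e)) (xI X e) => [a1 b1] [c d] hz.
  have h0 : a1 ^+ 2 + b1 ^+ 2 != 0.
    by rewrite -(cabs_sq (a1 +i* b1)) sqrf_eq0 cabs_eq0.
  rewrite NconjE !cabs_sq cconjE !cmulE /=; field => //.
Qed.


Section YSide.
Variable Y : yvar R n n.
Hypothesis hY : inY tl hd r x g b V0 s Y.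
Let vf := ext (V0 ^+ 2) (yv Y).

Lemma vf_pos j : 0 < vf j.
Proof.
rewrite /vf; case: (unliftP ord0 j) => [i ->|->]; rewrite ?extS ?ext0.
  exact: hY.1.
by rewrite exprn_gt0.
Qed.

Lemma yl_ge0 e : 0 <= yl Y e.
Proof.
have [_ [_ [_ [_ hl]]]] := hY; rewrite hl divr_ge0 ?addr_ge0 ?sqr_ge0 //.
exact: ltW (vf_pos _).
Qed.

Lemma VfE (th : 'I_n -> R) j :
  ext V0%:C (fun i => (Num.sqrt (yv Y i))%:C * expi (th i)) j
  = (Num.sqrt (vf j))%:C * expi (ext 0 th j).
Proof.
rewrite /vf; case: (unliftP ord0 j) => [i ->|->]; rewrite ?extS ?ext0 //.
by rewrite expi0 mulr1 sqrtr_sqr gtr0_norm.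
Qed.

Lemma expiB (a c : R) : expi (a - c) = expi a * (expi c)^-1.
Proof. by rewrite expiD -conj_expi conj_expiV. Qed.

Lemma conjR (a : R) : conjc (a%:C) = a%:C :> R[i].
Proof. by rewrite /= oppr0. Qed.

Lemma conjM (z w : R[i]) : conjc (z * w) = conjc z * conjc w.
Proof. by case: z => a1 b1; case: w => c d; rewrite !cmulE /=; congr (_ +i* _); ring. Qed.
Lemma conjB (z w : R[i]) : conjc (z - w) = conjc z - conjc w.
Proof. by case: z => a1 b1; case: w => c d; rewrite !csubE /=; congr (_ +i* _); ring. Qed.
Lemma conjV (z : R[i]) : conjc (z^-1) = (conjc z)^-1.
Proof. exact: conjc_inv. Qed.
Lemma conjKK (z : R[i]) : conjc (conjc z) = z.
Proof. exact: conjcK. Qed.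
Lemma rCM (a c : R) : (a * c)%:C = a%:C * c%:C :> R[i].
Proof. by rewrite crealE cmulE /=; congr (_ +i* _); ring. Qed.
Lemma rCV (a : R) : (a^-1)%:C = (a%:C)^-1 :> R[i].
Proof. exact: fmorphV. Qed.

Lemma rC_neq0 (a : R) : a != 0 -> a%:C != 0 :> R[i].
Proof. by move=> h; rewrite -[0]/((0:R)%:C) (inj_eq (@complexI _)). Qed.

Lemma cabs_w e :
  cabs ((vf (tl e))%:C - (zimp r x e)^*%C * (yP Y e +i* yQ Y e))
  = Num.sqrt (vf (tl e)) * Num.sqrt (vf (hd e)).
Proof.
have [_ [_ [_ [hd' hl]]]] := hY.
rewrite -sqrtrM; last exact: ltW (vf_pos _).
rewrite -[LHS]ger0_norm ?cabs_ge0 // -sqrtr_sqr cabs_sq; congr Num.sqrt.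
have hv := vf_pos (tl e); have hv0 : vf (tl e) != 0 by rewrite gt_eqF.
rewrite /vf in hv hv0 *; rewrite hd' hl /zimp cconjE cmulE crealE csubE /=.
by field.
Qed.

Lemma edge_iff (th : 'I_n -> R) e :
  let thf := ext 0 th in
  let S := yP Y e +i* yQ Y e in
  let Vf := ext V0%:C (fun i => (Num.sqrt (yv Y i))%:C * expi (th i)) in
  (Vf (tl e) - Vf (hd e) =
     zimp r x e * ((Num.sqrt (yl Y e))%:C * expi (thf (tl e) - carg S)))
  <-> expi (thf (tl e) - thf (hd e)) = expi (beta tl r x V0 Y e).
Proof.
move=> thf S Vf.
rewrite /Vf !VfE -/thf.
set p := Num.sqrt (vf (tl e)); set q := Num.sqrt (vf (hd e)).
set A := expi (thf (tl e)); set C := expi (thf (hd e)).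
set z := zimp r x e.
have hp : 0 < p by rewrite sqrtr_gt0 vf_pos.
have hq : 0 < q by rewrite sqrtr_gt0 vf_pos.
have pc0 : p%:C != 0 by rewrite rC_neq0 // gt_eqF.
have qc0 : q%:C != 0 by rewrite rC_neq0 // gt_eqF.
have A0 : A != 0 by rewrite expi_neq0.
have C0 : C != 0 by rewrite expi_neq0.
have hI : (Num.sqrt (yl Y e))%:C * expi (thf (tl e) - carg S) = conjc S * A / p%:C.
  have [_ [_ [_ [_ hl]]]] := hY.
  rewrite {2}[S]polar conjM conjR conj_expi expiD -/A.
  have -> : Num.sqrt (yl Y e) = cabs S / p.
    rewrite hl sqrtrM ?addr_ge0 ?sqr_ge0 // sqrtrV; last exact: ltW (vf_pos _).
    by [].
  rewrite rCM rCV; field.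
  by rewrite pc0.
have hvf : (vf (tl e))%:C = p%:C * p%:C.
  by rewrite -rCM -expr2 sqr_sqrtr // ltW // vf_pos.
have hw := polar ((vf (tl e))%:C - (zimp r x e)^*%C * S).
rewrite cabs_w -/p -/q in hw.
rewrite /beta -/vf NconjE -/S -/z.
rewrite hI expiB -/A -/C.
set w := _ - _ * S in hw *.
have hpq : (p * q)%:C != 0 by rewrite rC_neq0 // gt_eqF ?mulr_gt0.
split => H.
- apply: (mulfI hpq); rewrite -hw.
  have E2 := congr1 (@conjc _) H.
  rewrite conjB !conjM conjV !conjR conjKK /A /C !conj_expiV -/A -/C in E2.
  have E3 : conjc z * S = (p%:C * A^-1 - q%:C * C^-1) * p%:C * A.
    by rewrite E2; field; rewrite pc0 A0.
  rewrite /w hvf E3 rCM; field.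
  by rewrite A0 C0.
- have E1 : conjc z * S = p%:C * p%:C - (p * q)%:C * (A * C^-1).
    by rewrite H -hw /w hvf; ring.
  have E2 := congr1 (@conjc _) E1.
  rewrite !conjB !conjM conjV !conjR conjKK /A /C !conj_expiV invrK -/A -/C in E2.
  have -> : z * (conjc S * A / p%:C) = z * conjc S * A / p%:C by rewrite !mulrA.
  rewrite E2 rCM; field.
  by rewrite A0 andbT; exact: pc0.
Qed.


Lemma I_eq (th : 'I_n -> R) e :
  (Num.sqrt (yl Y e))%:C * expi (ext 0 th (tl e) - carg (yP Y e +i* yQ Y e))
  = conjc (yP Y e +i* yQ Y e) * expi (ext 0 th (tl e)) / (Num.sqrt (vf (tl e)))%:C.
Proof.
set S := yP Y e +i* yQ Y e; set A := expi (ext 0 th (tl e)); set p := Num.sqrt (vf (tl e)).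
have hp : 0 < p by rewrite sqrtr_gt0 vf_pos.
have pc0 : p%:C != 0 by rewrite rC_neq0 // gt_eqF.
have [_ [_ [_ [_ hl]]]] := hY.
rewrite {2}[S]polar conjM conjR conj_expi expiD -/A.
have -> : Num.sqrt (yl Y e) = cabs S / p.
  rewrite hl sqrtrM ?addr_ge0 ?sqr_ge0 // sqrtrV; last exact: ltW (vf_pos _).
  by [].
rewrite rCM rCV; field.
exact: pc0.
Qed.

Definition Rel (th : 'I_n -> R) := forall e,
  expi (ext 0 th (tl e) - ext 0 th (hd e)) = expi (beta tl r x V0 Y e).

Lemma inX_iff (th : 'I_n -> R) :
  inX tl hd r x g b V0 s (htheta tl th Y) <-> Rel th.
Proof.
split.
  by move=> [_ [hO _]] e; apply/(edge_iff th e).1; exact: hO e.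
move=> hR; split; [|split; [|split]].
- move=> i /=; rewrite mulf_neq0 ?expi_neq0 // rC_neq0 // gt_eqF // sqrtr_gt0.
  exact: hY.1.
- by move=> e; apply/(edge_iff th e).2.
- move=> e /=; rewrite VfE NconjE I_eq.
  set S := yP Y e +i* yQ Y e; set A := expi _; set p := Num.sqrt _.
  have hp : 0 < p by rewrite sqrtr_gt0 vf_pos.
  have pc0 : p%:C != 0 by rewrite rC_neq0 // gt_eqF.
  have A0 : A != 0 by rewrite expi_neq0.
  rewrite !conjM conjV conjKK conjR /A conj_expiV -/A; field.
  by rewrite A0 andbT; exact: pc0.
- have [_ [hp [hq _]]] := hY.
  move=> j /=.
  have hI2 : forall e, cabs ((Num.sqrt (yl Y e))%:C *
      expi (ext 0 th (tl e) - carg (yP Y e +i* yQ Y e))) ^+ 2 = yl Y e.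
    by move=> e; rewrite cabs_polar ?sqrtr_ge0 // sqr_sqrtr // yl_ge0.
  have hV2 : cabs (ext V0%:C (fun i => (Num.sqrt (yv Y i))%:C * expi (th i)) j) ^+ 2 = vf j.
    by rewrite VfE cabs_polar ?sqrtr_ge0 // sqr_sqrtr // ltW // vf_pos.
  rewrite hV2.
  apply: ceq2.
  + rewrite (@ext_map _ _ (@cRe R)) /= (hp j).
    rewrite cReD cReB !cRe_sum cReM cRe_real cIm_real mulr0 subr0.
    congr (_ - _ + _); apply: eq_bigr => e _.
    by rewrite cReB cReM cRe_real cIm_real mulr0 subr0 hI2.
  + rewrite (@ext_map _ _ (@cIm R)) /= (hq j).
    rewrite cImD cImB !cIm_sum cImM cRe_real cIm_real mulr0 add0r.
    congr (_ - _ + _); apply: eq_bigr => e _.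
    by rewrite cImB cImM cRe_real cIm_real mulr0 add0r hI2.
Qed.


Let B := incB R tl hd.
Let phi (i : 'I_n) := (invmx B *m \col_e beta tl r x V0 Y e) i 0.

Lemma Bphi e : ext 0 phi (tl e) - ext 0 phi (hd e) = beta tl r x V0 Y e.
Proof.
rewrite -(incB_col tree phi e).
have -> : \col_i phi i = invmx B *m \col_e beta tl r x V0 Y e.
  by apply/matrixP => i j; rewrite (ord1 j) [LHS]mxE.
by rewrite mulKVmx ?mxE // incB_unit.
Qed.

Lemma expi_th j :
  expi (ext 0 (theta_star tl hd r x V0 Y) j) = expi (ext 0 phi j).
Proof.
case: (unliftP ord0 j) => [i ->|->]; rewrite ?extS ?ext0 //.
exact: expi_Pmod.
Qed.

Lemma Rel_star : Rel (theta_star tl hd r x V0 Y).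
Proof. by move=> e; rewrite expiB !expi_th -expiB Bphi. Qed.

Lemma uniq_th (th' : 'I_n -> R) : in_range th' -> Rel th' ->
  th' = theta_star tl hd r x V0 Y.
Proof.
move=> hr hR.
have hP : forall j, expi (ext 0 th' j) = expi (ext 0 phi j).
  apply: (propagate tree); first by rewrite !ext0.
  move=> e; have := hR e; rewrite -Bphi !expiB => h.
  split => h1.
    move: h; rewrite h1 => /(mulfI (expi_neq0 _)) /invr_inj //.
  by move: h; rewrite h1 => /(mulIf (invr_neq0 (expi_neq0 _))).
apply: FunctionalExtensionality.functional_extensionality => i.
have := hP (lift ord0 i); rewrite !extS -(expi_Pmod (phi i)) => h.
have hr' : - pi < th' i <= pi by have [h1 h2] := hr i; rewrite h1 h2.
exact: (expi_inj hr' (Pmod_range _) h).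
Qed.

End YSide.
End Main.

Local Close Scope complex_scope.
Theorem theorem3 (R : realType) (n : nat) (tl hd : 'I_n -> 'I_n.+1)
    (r x : 'I_n -> R) (g b : 'I_n.+1 -> R) (V0 : R) (s : 'I_n -> R[i]) :
  is_tree tl hd -> 0 < V0 ->
  ((forall X, inX tl hd r x g b V0 s X -> inY tl hd r x g b V0 s (hhat X)) /\
   (forall Y, inY tl hd r x g b V0 s Y ->
      exists X, inX tl hd r x g b V0 s X /\ hhat X = Y)) /\
  (forall Y, inY tl hd r x g b V0 s Y ->
     let th := theta_star tl hd r x V0 Y in
     in_range th /\ inX tl hd r x g b V0 s (htheta tl th Y) /\
     (forall th' : 'I_n -> R, in_range th' ->
        inX tl hd r x g b V0 s (htheta tl th' Y) -> th' = th)).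
Proof.
move=> tree V0pos; split; first split.
- by move=> X; apply: (hatY V0pos).
- move=> Y hY; exists (htheta tl (theta_star tl hd r x V0 Y) Y); split.
    by apply/(inX_iff V0pos hY); apply: (Rel_star r x V0 tree).
  case: Y hY => P Q l v p0 q0 hY.
  rewrite /hhat /htheta /=; congr YVar.
  + apply: FunctionalExtensionality.functional_extensionality => e.
    by rewrite cabs_polar ?sqrtr_ge0 // sqr_sqrtr // (yl_ge0 V0pos hY e).
  + apply: FunctionalExtensionality.functional_extensionality => i.
    by rewrite cabs_polar ?sqrtr_ge0 // sqr_sqrtr // ltW // hY.1.
- move=> Y hY th; split; last split.
  + move=> i; have /andP [h1 h2] := Pmod_range ((invmx (incB R tl hd) *m \col_e beta tl r x V0 Y e) i 0).
    by split.
  + by apply/(inX_iff V0pos hY); apply: (Rel_star r x V0 tree).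
  + move=> th' hr hX; apply: (uniq_th tree hr).
    exact/(inX_iff V0pos hY).
Qed.
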